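(* Let $k\equiv\pm2,\pm4\pmod{10}$. Then $\operatorname{Ker}\nu_{G^k}=\{M=\begin{pmatrix} a&b\\ c&d\end{pmatrix}\in\Gamma_{\theta,5}: (b,c\in5\mathbb{Z}\text{ and }\tfrac b5\equiv\tfrac c5\pmod5)\text{ or }(a,d\in5\mathbb{Z}\text{ and }\tfrac a5\equiv-\tfrac d5\pmod5)\}$; in particular $\operatorname{Ker}\nu_{G^k}=\operatorname{Ker}\nu_{F^k}$.
   Context: $\Gamma_{\theta,5}=\{M\in SL(2,\mathbb{Z}): M\equiv\pm\begin{pmatrix}1&0\\0&1\end{pmatrix}\text{ or }\pm\begin{pmatrix}0&-1\\1&0\end{pmatrix}\pmod 5\}$. For $M=\begin{pmatrix} a&b\\ c&d\end{pmatrix}\in\Gamma_{\theta,5}$ define $g(M)=\frac{6b}{5}+\frac{2ab}{5}+\frac{2cd}{5}$ if $M\equiv I$, $\frac{24b}{5}+\frac{2ab}{5}+\frac{2cd}{5}$ if $M\equiv -I$, $5+\frac{6d}{5}+\frac{2ab}{5}+\frac{2cd}{5}$ if $M\equiv\begin{pmatrix}0&-1\\1&0\end{pmatrix}$, $5-\frac{6d}{5}+\frac{2ab}{5}+\frac{2cd}{5}$ if $M\equiv\begin{pmatrix}0&1\\-1&0\end{pmatrix}$ (all mod 5), and $f(M)$ by the same case split with values $\frac{4b}{5}+\frac{8ab}{5}+\frac{8cd}{5}$, $\frac{6b}{5}+\frac{8ab}{5}+\frac{8cd}{5}$, $5+\frac{4d}{5}+\frac{8ab}{5}+\frac{8cd}{5}$,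 $5-\frac{4d}{5}+\frac{8ab}{5}+\frac{8cd}{5}$ respectively. For $k\in\mathbb{Z}$, $\nu_{G^k}(M)=\exp(\frac{\pi ik}{5}g(M))$ and $\nu_{F^k}(M)=\exp(\frac{\pi ik}{5}f(M))$; these are the multiplier systems (weight $2k$) of $G^k$ and $F^k$, where $G=\eta^6/\big(\theta\begin{bmatrix}3/5\\3/5\end{bmatrix}\theta\begin{bmatrix}3/5\\7/5\end{bmatrix}\big)$, $F=\eta^6/\big(\theta\begin{bmatrix}1/5\\1/5\end{bmatrix}\theta\begin{bmatrix}1/5\\9/5\end{bmatrix}\big)$, with theta constants $\theta\begin{bmatrix}\epsilon\\ \epsilon'\end{bmatrix}=\sum_{n\in\mathbb{Z}}\exp(2\pi i[\frac12(n+\frac\epsilon2)^2\tau+(n+\frac\epsilon2)\frac{\epsilon'}2])$ and $\eta(\tau)=q^{1/24}\prod_{n\ge1}(1-q^n)$. Kernels are $\{M\in\Gamma_{\theta,5}:\nu(M)=1\}$. *)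

(* Defs.v *)
From Stdlib Require Import ZArith Reals.
From Coquelicot Require Import Coquelicot.
Open Scope R_scope.

Definition expi (t : R) : C := (cos t, sin t).

Definition inSL2Z (a b c d : Z) : Prop := (a * d - b * c)%Z = 1%Z.

Definition cong5 (x y : Z) : Prop := (x mod 5 = y mod 5)%Z.

(* M == I, -I, S = (0 -1; 1 0), -S = (0 1; -1 0)  (mod 5) *)
Definition modI (a b c d : Z) : Prop := cong5 a 1 /\ cong5 b 0 /\ cong5 c 0 /\ cong5 d 1.
Definition modmI (a b c d : Z) : Prop := cong5 a (-1) /\ cong5 b 0 /\ cong5 c 0 /\ cong5 d (-1).
Definition modS (a b c d : Z) : Prop := cong5 a 0 /\ cong5 b (-1) /\ cong5 c 1 /\ cong5 d 0.
Definition modmS (a b c d : Z) : Prop := cong5 a 0 /\ cong5 b 1 /\ cong5 c (-1) /\ cong5 d 0.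

Definition in_Gamma_theta5 (a b c d : Z) : Prop :=
  inSL2Z a b c d /\
  (modI a b c d \/ modmI a b c d \/ modS a b c d \/ modmS a b c d).

Definition cong5b (x y : Z) : bool := Z.eqb (x mod 5) (y mod 5).
Definition modIb (a b c d : Z) : bool := cong5b a 1 && cong5b b 0 && cong5b c 0 && cong5b d 1.
Definition modmIb (a b c d : Z) : bool := cong5b a (-1) && cong5b b 0 && cong5b c 0 && cong5b d (-1).
Definition modSb (a b c d : Z) : bool := cong5b a 0 && cong5b b (-1) && cong5b c 1 && cong5b d 0.

(* g(M); the last branch is the case M == (0 1; -1 0) mod 5
   (on Gamma_{theta,5} the four cases are exhaustive and disjoint) *)
Definition g_mult (a b c d : Z) : R :=
  let A := IZR a in let B := IZR b in let Cc := IZR c in let D := IZR d in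
  if modIb a b c d then 6 * B / 5 + 2 * A * B / 5 + 2 * Cc * D / 5
  else if modmIb a b c d then 24 * B / 5 + 2 * A * B / 5 + 2 * Cc * D / 5
  else if modSb a b c d then 5 + 6 * D / 5 + 2 * A * B / 5 + 2 * Cc * D / 5
  else 5 - 6 * D / 5 + 2 * A * B / 5 + 2 * Cc * D / 5.

Definition f_mult (a b c d : Z) : R :=
  let A := IZR a in let B := IZR b in let Cc := IZR c in let D := IZR d in
  if modIb a b c d then 4 * B / 5 + 8 * A * B / 5 + 8 * Cc * D / 5
  else if modmIb a b c d then 6 * B / 5 + 8 * A * B / 5 + 8 * Cc * D / 5
  else if modSb a b c d then 5 + 4 * D / 5 + 8 * A * B / 5 + 8 * Cc * D / 5
  else 5 - 4 * D / 5 + 8 * A * B / 5 + 8 * Cc * D / 5.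

Definition nu_G (k : Z) (a b c d : Z) : C := expi (PI * IZR k * g_mult a b c d / 5).
Definition nu_F (k : Z) (a b c d : Z) : C := expi (PI * IZR k * f_mult a b c d / 5).

Definition in_Ker_nu_G (k a b c d : Z) : Prop := in_Gamma_theta5 a b c d /\ nu_G k a b c d = 1%C.
Definition in_Ker_nu_F (k a b c d : Z) : Prop := in_Gamma_theta5 a b c d /\ nu_F k a b c d = 1%C.

Definition kernel_set (a b c d : Z) : Prop :=
  in_Gamma_theta5 a b c d /\
  (((5 | b)%Z /\ (5 | c)%Z /\ cong5 (b / 5) (c / 5)) \/
   ((5 | a)%Z /\ (5 | d)%Z /\ cong5 (a / 5) (- (d / 5)))).

(* Main.v *)
Require Import Defs.
From Stdlib Require Import ZArith Reals Lia Lra.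
From Coquelicot Require Import Coquelicot.
Open Scope R_scope.
Ltac zl := Z.div_mod_to_equations; lia.

Lemma cosZ (r : R) (m : Z) : cos (r + 2 * IZR m * PI) = cos r /\ sin (r + 2 * IZR m * PI) = sin r.
Proof.
  destruct (Z_le_gt_dec 0 m) as [H|H].
  - rewrite <- (Z2Nat.id m H), <- INR_IZR_INZ. split; [apply cos_period|apply sin_period].
  - assert (E: m = (- Z.of_nat (Z.to_nat (- m)))%Z) by zl.
    rewrite E, opp_IZR, <- INR_IZR_INZ.
    set (n := Z.to_nat (-m)).
    replace r with ((r + 2 * - INR n * PI) + 2 * INR n * PI) at 2 4 by ring.
    rewrite cos_period, sin_period. split; reflexivity.
Qed.

Lemma expi_one (t : R) : expi t = 1%C <-> exists n : Z, t = 2 * PI * IZR n.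
Proof.
  unfold expi. split.
  - intros H. injection H as H1 H2.
    destruct (sin_eq_0_0 t H2) as [k Hk].
    destruct (Zeven_odd_dec k) as [He|Ho].
    + destruct (Zeven_ex k He) as [m Hm]. exists m. rewrite Hk, Hm, mult_IZR. ring.
    + destruct (Zodd_ex k Ho) as [m Hm]. exfalso.
      assert (t = PI + 2 * IZR m * PI) by (rewrite Hk, Hm, plus_IZR, mult_IZR; ring).
      rewrite H in H1. rewrite (proj1 (cosZ PI m)), cos_PI in H1. lra.
  - intros [n Hn]. subst t.
    replace (2 * PI * IZR n) with (0 + 2 * IZR n * PI) by ring.
    destruct (cosZ 0 n) as [-> ->]. rewrite cos_0, sin_0. reflexivity.
Qed.

Lemma key (k N : Z) : expi (PI * IZR k * (IZR N / 5) / 5) = 1%C <-> ((k*N) mod 50 = 0)%Z.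
Proof.
  rewrite expi_one. split.
  - intros [n H].
    assert (E: IZR (k*N) = IZR (50*n)).
    { rewrite !mult_IZR. apply Rmult_eq_reg_l with (PI/25).
      - 
        replace (PI / 25 * (IZR k * IZR N)) with (PI * IZR k * (IZR N / 5) / 5) by field.
        rewrite H. field.
      - generalize PI_RGT_0; intro; lra. }
    apply eq_IZR in E. rewrite E, Z.mul_comm. apply Z_mod_mult.
  - intros H. exists ((k*N)/50)%Z.
    assert (E: (k*N = 50 * (k*N/50))%Z) by (revert H; generalize (k*N)%Z; intros z Hz; zl).
    apply (f_equal IZR) in E. rewrite !mult_IZR in E.
    replace (PI * IZR k * (IZR N / 5) / 5) with (PI/25 * (IZR k * IZR N)) by field.
    rewrite E. field.
Qed.

Lemma kl (k N : Z) : (k mod 10 = 2 \/ k mod 10 = 4 \/ k mod 10 = 6 \/ k mod 10 = 8)%Z ->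
  (N mod 5 = 0)%Z -> ((k*N) mod 50 = 0 <-> N mod 25 = 0)%Z.
Proof.
  intros hk HN.
  assert (EN: (N = 5 * (N/5))%Z) by zl.
  assert (Ek: (k = 10 * (k/10) + k mod 10)%Z) by zl.
  assert (E: (k * N = 50 * ((k/10)*(N/5)) + (k mod 10) * 5 * (N/5))%Z).
  { rewrite Ek at 1. rewrite EN at 1. ring. }
  rewrite E. generalize ((k/10)*(N/5))%Z. intro u.
  destruct hk as [H|[H|[H|H]]]; rewrite H; zl.
Qed.

Lemma div5 (x : Z) : (5 | x)%Z <-> (x mod 5 = 0)%Z.
Proof. symmetry. apply Z.mod_divide. lia. Qed.

Lemma finish (k N L X : Z) : (k mod 10 = 2 \/ k mod 10 = 4 \/ k mod 10 = 6 \/ k mod 10 = 8)%Z ->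
  (N = 25*X + 5*L)%Z -> ((k*N) mod 50 = 0 <-> L mod 5 = 0)%Z.
Proof.
  intros hk E. rewrite kl by (exact hk || (rewrite E; zl)). rewrite E. zl.
Qed.

Definition cond (a b c d : Z) : Prop :=
  ((5 | b)%Z /\ (5 | c)%Z /\ cong5 (b / 5) (c / 5)) \/
  ((5 | a)%Z /\ (5 | d)%Z /\ cong5 (a / 5) (- (d / 5))).

Ltac getv v r := let x := fresh "x" in
  assert (exists x, v = 5*x + r)%Z as [x ->] by (exists ((v - r)/5)%Z; zl).

Lemma G_modI (k a b c d : Z) : (k mod 10 = 2 \/ k mod 10 = 4 \/ k mod 10 = 6 \/ k mod 10 = 8)%Z ->
  modI a b c d -> (expi (PI * IZR k * g_mult a b c d / 5) = 1%C <-> cond a b c d).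
Proof.
  intros hk [H1 [H2 [H3 H4]]].
  assert (E0: modIb a b c d = true) by (unfold modIb, modmIb, modSb, cong5b; rewrite H1, H2, H3, H4; reflexivity).
  assert (Eg: g_mult a b c d = IZR (6*b+2*a*b+2*c*d) / 5).
  { unfold g_mult. rewrite E0. cbv zeta.
    rewrite ?plus_IZR, ?minus_IZR, ?mult_IZR, ?opp_IZR. field. }
  rewrite Eg, key. unfold cong5 in *.
  getv a (1)%Z. getv b (0)%Z. getv c (0)%Z. getv d (1)%Z.
  rewrite (finish k _ (3*x0+2*x1) (2*(x*x0+x1*x2)+x0)) by (exact hk || ring).
  unfold cond, cong5. rewrite !div5. zl.
Qed.

Lemma F_modI (k a b c d : Z) : (k mod 10 = 2 \/ k mod 10 = 4 \/ k mod 10 = 6 \/ k mod 10 = 8)%Z ->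
  modI a b c d -> (expi (PI * IZR k * f_mult a b c d / 5) = 1%C <-> cond a b c d).
Proof.
  intros hk [H1 [H2 [H3 H4]]].
  assert (E0: modIb a b c d = true) by (unfold modIb, modmIb, modSb, cong5b; rewrite H1, H2, H3, H4; reflexivity).
  assert (Eg: f_mult a b c d = IZR (4*b+8*a*b+8*c*d) / 5).
  { unfold f_mult. rewrite E0. cbv zeta.
    rewrite ?plus_IZR, ?minus_IZR, ?mult_IZR, ?opp_IZR. field. }
  rewrite Eg, key. unfold cong5 in *.
  getv a (1)%Z. getv b (0)%Z. getv c (0)%Z. getv d (1)%Z.
  rewrite (finish k _ (2*x0+3*x1) (8*(x*x0+x1*x2)+2*x0+x1)) by (exact hk || ring).
  unfold cond, cong5. rewrite !div5. zl.
Qed.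

Lemma G_modmI (k a b c d : Z) : (k mod 10 = 2 \/ k mod 10 = 4 \/ k mod 10 = 6 \/ k mod 10 = 8)%Z ->
  modmI a b c d -> (expi (PI * IZR k * g_mult a b c d / 5) = 1%C <-> cond a b c d).
Proof.
  intros hk [H1 [H2 [H3 H4]]].
  assert (E0: modIb a b c d = false) by (unfold modIb, modmIb, modSb, cong5b; rewrite H1, H2, H3, H4; reflexivity).
  assert (E1: modmIb a b c d = true) by (unfold modIb, modmIb, modSb, cong5b; rewrite H1, H2, H3, H4; reflexivity).
  assert (Eg: g_mult a b c d = IZR (24*b+2*a*b+2*c*d) / 5).
  { unfold g_mult. rewrite E0, E1. cbv zeta.
    rewrite ?plus_IZR, ?minus_IZR, ?mult_IZR, ?opp_IZR. field. }
  rewrite Eg, key. unfold cong5 in *.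
  getv a (-1)%Z. getv b (0)%Z. getv c (0)%Z. getv d (-1)%Z.
  rewrite (finish k _ (2*x0-2*x1) (2*(x*x0+x1*x2)+4*x0)) by (exact hk || ring).
  unfold cond, cong5. rewrite !div5. zl.
Qed.

Lemma F_modmI (k a b c d : Z) : (k mod 10 = 2 \/ k mod 10 = 4 \/ k mod 10 = 6 \/ k mod 10 = 8)%Z ->
  modmI a b c d -> (expi (PI * IZR k * f_mult a b c d / 5) = 1%C <-> cond a b c d).
Proof.
  intros hk [H1 [H2 [H3 H4]]].
  assert (E0: modIb a b c d = false) by (unfold modIb, modmIb, modSb, cong5b; rewrite H1, H2, H3, H4; reflexivity).
  assert (E1: modmIb a b c d = true) by (unfold modIb, modmIb, modSb, cong5b; rewrite H1, H2, H3, H4; reflexivity).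
  assert (Eg: f_mult a b c d = IZR (6*b+8*a*b+8*c*d) / 5).
  { unfold f_mult. rewrite E0, E1. cbv zeta.
    rewrite ?plus_IZR, ?minus_IZR, ?mult_IZR, ?opp_IZR. field. }
  rewrite Eg, key. unfold cong5 in *.
  getv a (-1)%Z. getv b (0)%Z. getv c (0)%Z. getv d (-1)%Z.
  rewrite (finish k _ (-2*x0+2*x1) (8*(x*x0+x1*x2)-2*x1)) by (exact hk || ring).
  unfold cond, cong5. rewrite !div5. zl.
Qed.

Lemma G_modS (k a b c d : Z) : (k mod 10 = 2 \/ k mod 10 = 4 \/ k mod 10 = 6 \/ k mod 10 = 8)%Z ->
  modS a b c d -> (expi (PI * IZR k * g_mult a b c d / 5) = 1%C <-> cond a b c d).
Proof.
  intros hk [H1 [H2 [H3 H4]]].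
  assert (E0: modIb a b c d = false) by (unfold modIb, modmIb, modSb, cong5b; rewrite H1, H2, H3, H4; reflexivity).
  assert (E1: modmIb a b c d = false) by (unfold modIb, modmIb, modSb, cong5b; rewrite H1, H2, H3, H4; reflexivity).
  assert (E2: modSb a b c d = true) by (unfold modIb, modmIb, modSb, cong5b; rewrite H1, H2, H3, H4; reflexivity).
  assert (Eg: g_mult a b c d = IZR (25+6*d+2*a*b+2*c*d) / 5).
  { unfold g_mult. rewrite E0, E1, E2. cbv zeta.
    rewrite ?plus_IZR, ?minus_IZR, ?mult_IZR, ?opp_IZR. field. }
  rewrite Eg, key. unfold cong5 in *.
  getv a (0)%Z. getv b (-1)%Z. getv c (1)%Z. getv d (0)%Z.
  rewrite (finish k _ (-2*x+3*x2) (1+2*(x*x0+x1*x2)+x2)) by (exact hk || ring).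
  unfold cond, cong5. rewrite !div5. zl.
Qed.

Lemma F_modS (k a b c d : Z) : (k mod 10 = 2 \/ k mod 10 = 4 \/ k mod 10 = 6 \/ k mod 10 = 8)%Z ->
  modS a b c d -> (expi (PI * IZR k * f_mult a b c d / 5) = 1%C <-> cond a b c d).
Proof.
  intros hk [H1 [H2 [H3 H4]]].
  assert (E0: modIb a b c d = false) by (unfold modIb, modmIb, modSb, cong5b; rewrite H1, H2, H3, H4; reflexivity).
  assert (E1: modmIb a b c d = false) by (unfold modIb, modmIb, modSb, cong5b; rewrite H1, H2, H3, H4; reflexivity).
  assert (E2: modSb a b c d = true) by (unfold modIb, modmIb, modSb, cong5b; rewrite H1, H2, H3, H4; reflexivity).
  assert (Eg: f_mult a b c d = IZR (25+4*d+8*a*b+8*c*d) / 5).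
  { unfold f_mult. rewrite E0, E1, E2. cbv zeta.
    rewrite ?plus_IZR, ?minus_IZR, ?mult_IZR, ?opp_IZR. field. }
  rewrite Eg, key. unfold cong5 in *.
  getv a (0)%Z. getv b (-1)%Z. getv c (1)%Z. getv d (0)%Z.
  rewrite (finish k _ (2*x+2*x2) (1+8*(x*x0+x1*x2)-2*x+2*x2)) by (exact hk || ring).
  unfold cond, cong5. rewrite !div5. zl.
Qed.

Lemma G_modmS (k a b c d : Z) : (k mod 10 = 2 \/ k mod 10 = 4 \/ k mod 10 = 6 \/ k mod 10 = 8)%Z ->
  modmS a b c d -> (expi (PI * IZR k * g_mult a b c d / 5) = 1%C <-> cond a b c d).
Proof.
  intros hk [H1 [H2 [H3 H4]]].
  assert (E0: modIb a b c d = false) by (unfold modIb, modmIb, modSb, cong5b; rewrite H1, H2, H3, H4; reflexivity).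
  assert (E1: modmIb a b c d = false) by (unfold modIb, modmIb, modSb, cong5b; rewrite H1, H2, H3, H4; reflexivity).
  assert (E2: modSb a b c d = false) by (unfold modIb, modmIb, modSb, cong5b; rewrite H1, H2, H3, H4; reflexivity).
  assert (Eg: g_mult a b c d = IZR (25-6*d+2*a*b+2*c*d) / 5).
  { unfold g_mult. rewrite E0, E1, E2. cbv zeta.
    rewrite ?plus_IZR, ?minus_IZR, ?mult_IZR, ?opp_IZR. field. }
  rewrite Eg, key. unfold cong5 in *.
  getv a (0)%Z. getv b (1)%Z. getv c (-1)%Z. getv d (0)%Z.
  rewrite (finish k _ (2*x+2*x2) (1+2*(x*x0+x1*x2)-2*x2)) by (exact hk || ring).
  unfold cond, cong5. rewrite !div5. zl.
Qed.

Lemma F_modmS (k a b c d : Z) : (k mod 10 = 2 \/ k mod 10 = 4 \/ k mod 10 = 6 \/ k mod 10 = 8)%Z ->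
  modmS a b c d -> (expi (PI * IZR k * f_mult a b c d / 5) = 1%C <-> cond a b c d).
Proof.
  intros hk [H1 [H2 [H3 H4]]].
  assert (E0: modIb a b c d = false) by (unfold modIb, modmIb, modSb, cong5b; rewrite H1, H2, H3, H4; reflexivity).
  assert (E1: modmIb a b c d = false) by (unfold modIb, modmIb, modSb, cong5b; rewrite H1, H2, H3, H4; reflexivity).
  assert (E2: modSb a b c d = false) by (unfold modIb, modmIb, modSb, cong5b; rewrite H1, H2, H3, H4; reflexivity).
  assert (Eg: f_mult a b c d = IZR (25-4*d+8*a*b+8*c*d) / 5).
  { unfold f_mult. rewrite E0, E1, E2. cbv zeta.
    rewrite ?plus_IZR, ?minus_IZR, ?mult_IZR, ?opp_IZR. field. }
  rewrite Eg, key. unfold cong5 in *.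
  getv a (0)%Z. getv b (1)%Z. getv c (-1)%Z. getv d (0)%Z.
  rewrite (finish k _ (3*x-2*x2) (1+8*(x*x0+x1*x2)+x-2*x2)) by (exact hk || ring).
  unfold cond, cong5. rewrite !div5. zl.
Qed.

Lemma G_iff k a b c d : (k mod 10 = 2 \/ k mod 10 = 4 \/ k mod 10 = 6 \/ k mod 10 = 8)%Z ->
  in_Gamma_theta5 a b c d -> (nu_G k a b c d = 1%C <-> cond a b c d).
Proof.
  intros hk [_ [H|[H|[H|H]]]]; unfold nu_G.
  - apply G_modI; assumption.
  - apply G_modmI; assumption.
  - apply G_modS; assumption.
  - apply G_modmS; assumption.
Qed.

Lemma F_iff k a b c d : (k mod 10 = 2 \/ k mod 10 = 4 \/ k mod 10 = 6 \/ k mod 10 = 8)%Z ->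
  in_Gamma_theta5 a b c d -> (nu_F k a b c d = 1%C <-> cond a b c d).
Proof.
  intros hk [_ [H|[H|[H|H]]]]; unfold nu_F.
  - apply F_modI; assumption.
  - apply F_modmI; assumption.
  - apply F_modS; assumption.
  - apply F_modmS; assumption.
Qed.

Theorem mainTheorem12 (k : Z)
  (hk : (k mod 10 = 2 \/ k mod 10 = 4 \/ k mod 10 = 6 \/ k mod 10 = 8)%Z) :
  (forall a b c d : Z, in_Ker_nu_G k a b c d <-> kernel_set a b c d) /\
  (forall a b c d : Z, in_Ker_nu_G k a b c d <-> in_Ker_nu_F k a b c d).
Proof.
  split; intros a b c d; unfold in_Ker_nu_G, in_Ker_nu_F, kernel_set; split.
  - intros [HG Hn]. split; [exact HG|]. apply (G_iff k a b c d hk HG); exact Hn.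
  - intros [HG Hc]. split; [exact HG|]. apply (G_iff k a b c d hk HG); exact Hc.
  - intros [HG Hn]. split; [exact HG|]. apply (F_iff k a b c d hk HG), (G_iff k a b c d hk HG); exact Hn.
  - intros [HG Hn]. split; [exact HG|]. apply (G_iff k a b c d hk HG), (F_iff k a b c d hk HG); exact Hn.
Qed.
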